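(* Let $m,n,k$ be positive integers with $(m,k-1)=1$ and $n=\mathrm{ind}_m(k)$, let $G=G(m,n,k)=\langle a,b;\ a^m=1,\ b^n=1,\ b^{-1}ab=a^k\rangle$, $R=\{k_j\bmod m: j\in\mathbb{Z}_n\}$ and $L=\{-k_j\bmod m:j\in\mathbb{Z}_n\}$. Then $R$ and $L$ are bases, and $\mathrm{P}(G)=\Sigma_G(R)$ and $\Lambda(G)=\Sigma_G(L)$.
   Context: $\mathrm{ind}_m(k)$ is the least positive integer $d$ with $k^d\equiv1\pmod m$; $k_t=k^t-1\pmod m$. Elements of $G$ are written uniquely as $a^ib^j$. Commutators are $[x,y]=x^{-1}y^{-1}xy$; $(x)\rho(g)=[x,g]$, $(x)\lambda(g)=[g,x]$ (maps written on the right, composed left to right); $\mathrm{P}(G)$ and $\Lambda(G)$ are the semigroups under composition generated by $\{\rho(g):g\in G\}$ and $\{\lambda(g):g\in G\}$. For $x,y\in\mathbb{Z}_m$, $\mu(x,y):G\to G$ is $(a^ib^j)\mu(x,y)=a^{xik^j-yk_j}$. A base is a subset $S\subseteq\mathbb{Z}_m$ containing $0$ and at least one element invertible in $\mathbb{Z}_m$; $\Sigma_G(S)$ is the semigroup under composition generated by $\{\mu(s,z):s\in S,z\in\mathbb{Z}_m\}$. *)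

(* Defs.v *)
From mathcomp Require Import all_boot all_order all_algebra.
Unset Printing Implicit Defensive.

Definition is_ind (m k n : nat) : Prop :=
  [/\ 0 < n, k ^ n = 1 %[mod m] &
      forall d, 0 < d -> k ^ d = 1 %[mod m] -> n <= d].

(* Carrier of G(m,n,k): the element a^i b^j is the pair (i, j), i < m, j < n
   (normal form). *)
Definition Gt (m n : nat) := ('I_m * 'I_n)%type.

(* (a^i b^j)(a^i' b^j') = a^(i + i' k^(-j)) b^(j+j'), and k^(-j) = k^(n-j)
   mod m since k^n = 1 mod m.  [insubd] with default the input coordinate is
   just a way to build the ordinal (the value is always in range). *)
Definition mulG (m n k : nat) (g h : Gt m n) : Gt m n :=
  (insubd g.1 ((g.1 + h.1 * k ^ (n - g.2)) %% m),
   insubd g.2 ((g.2 + h.2) %% n)).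

(* (a^i b^j)^-1 = b^-j a^-i = a^(-i k^j) b^(-j). *)
Definition invG (m n k : nat) (g : Gt m n) : Gt m n :=
  (insubd g.1 ((m - (g.1 * k ^ g.2) %% m) %% m),
   insubd g.2 ((n - g.2) %% n)).

Definition commG (m n k : nat) (x y : Gt m n) : Gt m n :=
  mulG m n k (mulG m n k (invG m n k x) (invG m n k y)) (mulG m n k x y).

Definition rhoG (m n k : nat) (g : Gt m n) : {ffun Gt m n -> Gt m n} :=
  [ffun x => commG m n k x g].
Definition lambdaG (m n k : nat) (g : Gt m n) : {ffun Gt m n -> Gt m n} :=
  [ffun x => commG m n k g x].

Definition muG (m n k : nat) (x y : 'I_m) : {ffun Gt m n -> Gt m n} :=
  [ffun g : Gt m n =>
     (insubd g.1 `|((x%:Z * g.1%:Z * (k ^ g.2)%:Z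
                      - y%:Z * ((k ^ g.2)%:Z - 1)) %% m%:Z)%Z|%N,
      insubd g.2 0)].

(* Composition of maps written on the right: (x)(f;g) = ((x)f)g. *)
Definition compR (T : finType) (f g : {ffun T -> T}) : {ffun T -> T} :=
  [ffun x => g (f x)].

Inductive sg_gen (T : finType) (S : {ffun T -> T} -> Prop) :
    {ffun T -> T} -> Prop :=
  | sg_base f : S f -> sg_gen T S f
  | sg_comp f g : sg_gen T S f -> sg_gen T S g -> sg_gen T S (compR T f g).

Definition PG (m n k : nat) := @sg_gen (Gt m n) (fun f => exists g : Gt m n, f = rhoG m n k g).
Definition LambdaG (m n k : nat) :=
  @sg_gen (Gt m n) (fun f => exists g : Gt m n, f = lambdaG m n k g).

Definition SigmaG (m n k : nat) (S : {set 'I_m}) :=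
  @sg_gen (Gt m n) (fun f => exists (s z : 'I_m), s \in S /\ f = muG m n k s z).

Definition is_base (m : nat) (S : {set 'I_m}) : Prop :=
  (exists s : 'I_m, s \in S /\ val s = 0) /\
  (exists s : 'I_m, s \in S /\ coprime s m).

Definition Rset (m n k : nat) : {set 'I_m} :=
  [set s : 'I_m | [exists j : 'I_n, val s == (k ^ j - 1) %% m]].
Definition Lset (m n k : nat) : {set 'I_m} :=
  [set s : 'I_m | [exists j : 'I_n, val s == (m - (k ^ j - 1) %% m) %% m]].

(* Main.v *)
Require Import Defs.
From mathcomp Require Import all_boot all_order all_algebra.
From mathcomp Require Import zify ring.
Import GRing.Theory Num.Theory.
Local Open Scope ring_scope.

Lemma ordZ (m : nat) (u v : 'I_m) :
  (1 < m)%N -> ((val u)%:R : 'Z_m) = (val v)%:R -> u = v.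
Proof.
move=> hm H; apply: val_inj.
have := congr1 (@nat_of_ord _) H; rewrite !val_Zp_nat // !modn_small //; exact: ltn_ord.
Qed.

Lemma ordZ' (m : nat) (u v : 'I_m) :
  ((1 < m)%N -> ((val u)%:R : 'Z_m) = (val v)%:R) -> u = v.
Proof.
move=> H; case: (ltnP 1 m) => hm.
  exact: (@ordZ m u v hm (H hm)).
apply: val_inj => /=; have := ltn_ord u; have := ltn_ord v; move: hm; clear; lia.
Qed.

Lemma absmod_nat (m : nat) (e : int) : (0 < m)%N ->
  (`|(e %% m%:Z)%Z|%N < m)%N.
Proof.
move=> hm; rewrite -ltz_nat abszE ger0_norm ?modz_ge0 ?ltz_pmod //; lia.
Qed.

Lemma absmod_R (m : nat) (e : int) : (1 < m)%N ->
  ((`|(e %% m%:Z)%Z|%N)%:R : 'Z_m) = e%:~R.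
Proof.
move=> hm.
have -> : (`|(e %% m%:Z)%Z|%N)%:R = ((`|(e %% m%:Z)%Z|%N)%:Z)%:~R :> 'Z_m by [].
rewrite abszE ger0_norm; last by rewrite modz_ge0 //; lia.
rewrite /modz intrB intrM.
have -> : ((m%:Z)%:~R : 'Z_m) = 0 by rewrite -[LHS]/(m%:R) pchar_Zp.
by rewrite mulr0 subr0.
Qed.

Lemma Kmod (R : pzRingType) (K : R) n a : K ^+ n = 1 -> K ^+ a = K ^+ (a %% n).
Proof. by move=> H; rewrite {1}(divn_eq a n) exprD mulnC exprM H expr1n mul1r. Qed.

Lemma Kinv (R : comPzRingType) (K : R) n a : (0 < n)%N -> K ^+ n = 1 ->
  K ^+ (n - a %% n) * K ^+ a = 1.
Proof.
by move=> hn H; rewrite [K ^+ a](Kmod _ _ _ a H) -exprD subnK ?(ltnW (ltn_pmod _ _)).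
Qed.

Lemma uinv (R : comPzRingType) (X Y Z : R) : X * Y = 1 -> Y * Z = 1 -> X = Z.
Proof. by move=> h1 h2; rewrite -[X]mulr1 -h2 mulrA h1 mul1r. Qed.

Lemma vmod m a : (0 < m)%N -> (a %% m < m)%N.
Proof. exact: ltn_pmod. Qed.

Lemma modsubR m a : (1 < m)%N -> (((m - a %% m) %% m)%:R : 'Z_m) = - a%:R.
Proof.
move=> hm; rewrite Zp_nat_mod // natrB; last by apply: ltnW; apply: ltn_pmod; lia.
by rewrite pchar_Zp // Zp_nat_mod // sub0r.
Qed.

Lemma comm1 m n k (x g : Gt m n) : (1 < m)%N -> (0 < n)%N ->
  (k%:R : 'Z_m) ^+ n = 1 ->
  ((val (commG m n k x g).1)%:R : 'Z_m) =
   (val x.1)%:R * (k%:R) ^+ x.2 * ((k%:R) ^+ g.2 - 1)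
   - (val g.1)%:R * (k%:R) ^+ g.2 * ((k%:R) ^+ x.2 - 1).
Proof.
move=> hm hn hK.
have hm0 : (0 < m)%N by lia.
case: x => [[i hi] [j hj]]; case: g => [[s hs] [t ht]].
rewrite /commG /mulG /invG /=.
rewrite !val_insubd !vmod //=.
rewrite !(modsubR, Zp_nat_mod, natrD, natrM, natrX) //.
set K := (k%:R : 'Z_m).
have hA : K ^+ (n - j) * K ^+ j = 1 by rewrite -exprD subnK ?hK // ltnW.
have hAt : K ^+ (n - t) * K ^+ t = 1 by rewrite -exprD subnK ?hK // ltnW.
have hB : K ^+ (n - (n - j) %% n) = K ^+ j by apply: uinv (Kinv _ _ _ _ hn hK) hA.
have hC : K ^+ (n - ((n - j) %% n + (n - t) %% n) %% n) = K ^+ j * K ^+ t.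
  apply: uinv (Kinv _ _ _ _ hn hK) _.
  rewrite exprD -!(Kmod _ _ _ _ hK).
  by rewrite mulrACA hA hAt mulr1.
rewrite hB hC.
have e : (i%:R + s%:R * K ^+ (n - j)) * (K ^+ j * K ^+ t) =
   i%:R * K ^+ j * K ^+ t + s%:R * (K ^+ (n - j) * K ^+ j) * K ^+ t by ring.
rewrite e hA; ring.
Qed.

Lemma comm2 m n k (x g : Gt m n) : (0 < m)%N -> (0 < n)%N ->
  val (commG m n k x g).2 = 0%N.
Proof.
move=> hm hn.
case: x => [[i hi] [j hj]]; case: g => [[s hs] [t ht]].
rewrite /commG /mulG /invG /=.
rewrite !val_insubd !vmod //=.
rewrite !modnDm -addnA modnDml addnCA modnDml.
have -> : (n - t + (n - j + (j + t)) = n * 2)%N by lia.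
by rewrite modnMr.
Qed.

Lemma mu1 m n k (x y : 'I_m) (g : Gt m n) : (1 < m)%N ->
  ((val (muG m n k x y g).1)%:R : 'Z_m) =
  (val x)%:R * (val g.1)%:R * (k%:R) ^+ g.2 - (val y)%:R * ((k%:R) ^+ g.2 - 1).
Proof.
move=> hm; rewrite ffunE /= val_insubd absmod_nat; last by lia.
rewrite absmod_R // !(intrB, intrM) -!pmulrn !natrX //.
Qed.

Lemma mu2 m n k (x y : 'I_m) (g : Gt m n) : (0 < n)%N ->
  val (muG m n k x y g).2 = 0%N.
Proof. by move=> hn; rewrite ffunE /= val_insubd hn. Qed.

Lemma natZ m a b : (1 < m)%N -> (a < m)%N -> (b < m)%N ->
  (a%:R : 'Z_m) = b%:R -> a = b.
Proof.
move=> hm ha hb H.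
by have := congr1 (@nat_of_ord _) H; rewrite !val_Zp_nat // !modn_small.
Qed.

Lemma pairE (A B : Type) (p q : A * B) : p.1 = q.1 -> p.2 = q.2 -> p = q.
Proof. by case: p => a b; case: q => c d /= -> ->. Qed.

Lemma sg_sub (T : finType) (S1 S2 : {ffun T -> T} -> Prop) :
  (forall f, S1 f -> sg_gen T S2 f) -> forall f, sg_gen T S1 f -> sg_gen T S2 f.
Proof.
move=> H f; elim => [g Hg | g h _ IHg _ IHh]; first exact: H.
exact: sg_comp.
Qed.

Lemma rho_mu m n k (g : Gt m n) (x y : 'I_m) : (0 < m)%N -> (0 < n)%N ->
  ((1 < m)%N -> (k%:R : 'Z_m) ^+ n = 1 /\
     ((val x)%:R : 'Z_m) = (k%:R) ^+ g.2 - 1 /\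
     ((val y)%:R : 'Z_m) = (val g.1)%:R * (k%:R) ^+ g.2) ->
  rhoG m n k g = muG m n k x y.
Proof.
move=> hm hn H; apply/ffunP => h; rewrite [LHS]ffunE.
apply: pairE.
  apply: ordZ' => hm1; case: (H hm1) => hK [hx hy].
  by rewrite comm1 // mu1 // hx hy; ring.
by apply: val_inj; rewrite /= comm2 // mu2.
Qed.

Lemma lam_mu m n k (g : Gt m n) (x y : 'I_m) : (0 < m)%N -> (0 < n)%N ->
  ((1 < m)%N -> (k%:R : 'Z_m) ^+ n = 1 /\
     ((val x)%:R : 'Z_m) = - ((k%:R) ^+ g.2 - 1) /\
     ((val y)%:R : 'Z_m) = - ((val g.1)%:R * (k%:R) ^+ g.2)) ->
  lambdaG m n k g = muG m n k x y.
Proof.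
move=> hm hn H; apply/ffunP => h; rewrite [LHS]ffunE.
apply: pairE.
  apply: ordZ' => hm1; case: (H hm1) => hK [hx hy].
  by rewrite comm1 // mu1 // hx hy; ring.
by apply: val_inj; rewrite /= comm2 // mu2.
Qed.
Local Close Scope ring_scope.

Lemma coprime_subl m r : (r <= m)%N -> coprime r m -> coprime (m - r) m.
Proof.
move=> hr hc; rewrite /coprime in hc *.
have e1 : gcdn (m - r) m = gcdn (m - r) r.
  by rewrite -{2}(subnK hr) gcdnDl.
have e2 : gcdn r m = gcdn r (m - r).
  by rewrite -{1}(subnK hr) gcdnDr.
by rewrite e1 gcdnC -e2.
Qed.

Theorem lemma4p2 (m n k : nat) (hm : 0 < m) (hn : 0 < n) (hk : 0 < k)
  (hcop : coprime m (k - 1)) (hind : is_ind m k n) :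
  [/\ is_base m (Rset m n k), is_base m (Lset m n k),
      (forall f, PG m n k f <-> SigmaG m n k (Rset m n k) f) &
      (forall f, LambdaG m n k f <-> SigmaG m n k (Lset m n k) f)].
Proof.
have hK : (1 < m)%N -> ((k%:R : 'Z_m) ^+ n = 1)%R.
  move=> hm1; case: hind => _ hkn _.
  by rewrite -natrX -Zp_nat_mod // hkn Zp_nat_mod.
have hpos : forall a, (1 <= k ^ a)%N by move=> a; rewrite expn_gt0 hk.
have hj1 : (1 %% n < n)%N := vmod _ 1 hn.
have hr : coprime ((k ^ (1 %% n) - 1) %% m) m.
  suff -> : ((k ^ (1 %% n) - 1) %% m = (k - 1) %% m)%N.
    by rewrite coprime_modl coprime_sym.
  case: (ltnP 1 m) => hm1.
    apply: (@natZ m _ _ hm1 (vmod _ _ hm) (vmod _ _ hm)).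
    rewrite !Zp_nat_mod //. rewrite natrB; last exact: hpos. rewrite natrB // natrX.
    by rewrite -(Kmod _ _ _ _ (hK hm1)) expr1.
  have -> : m = 1%N by lia.
  by rewrite !modn1.
split.
- split.
    exists (Ordinal hm); split => //.
    rewrite inE; apply/existsP; exists (Ordinal hn) => /=.
    by rewrite expn0 subnn mod0n.
  exists (Ordinal (vmod _ (k ^ (1 %% n) - 1) hm)); split => //.
  by rewrite inE; apply/existsP; exists (Ordinal hj1) => /=.
- split.
    exists (Ordinal hm); split => //.
    rewrite inE; apply/existsP; exists (Ordinal hn) => /=.
    by rewrite expn0 subnn mod0n subn0 modnn.
  exists (Ordinal (vmod _ (m - (k ^ (1 %% n) - 1) %% m) hm)); split.
    by rewrite inE; apply/existsP; exists (Ordinal hj1) => /=.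
  rewrite /= coprime_modl; apply: coprime_subl => //.
  by apply: ltnW; apply: vmod.
- move=> f; split; apply: sg_sub => f0.
    case=> g ->; case: g => [s0 t].
    apply: sg_base.
    exists (Ordinal (vmod _ (k ^ t - 1) hm)), (Ordinal (vmod _ (s0 * k ^ t) hm)); split.
      by rewrite inE; apply/existsP; exists t => /=.
    apply: rho_mu => // hm1; split; first exact: hK hm1.
    split => /=.
      by rewrite Zp_nat_mod // natrB ?hpos // natrX.
    by rewrite Zp_nat_mod // natrM natrX.
  case=> s [z [hs ->]].
  move: hs; rewrite inE => /existsP [j /eqP hj].
  apply: sg_base.
  exists (Ordinal (vmod _ (z * k ^ (n - j)) hm), j).
  symmetry; apply: rho_mu => // hm1; split; first exact: hK hm1.
  split => /=.
    by rewrite hj Zp_nat_mod // natrB ?hpos // natrX.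
  rewrite Zp_nat_mod // natrM !natrX -mulrA -exprD subnK ?(hK hm1) ?mulr1 //.
  exact: ltnW.
- move=> f; split; apply: sg_sub => f0.
    case=> g ->; case: g => [s0 t].
    apply: sg_base.
    exists (Ordinal (vmod _ (m - (k ^ t - 1) %% m) hm)),
           (Ordinal (vmod _ (m - (s0 * k ^ t) %% m) hm)); split.
      by rewrite inE; apply/existsP; exists t => /=.
    apply: lam_mu => // hm1; split; first exact: hK hm1.
    split => /=.
      by rewrite modsubR // natrB ?hpos // natrX.
    by rewrite modsubR // natrM natrX.
  case=> s [z [hs ->]].
  move: hs; rewrite inE => /existsP [j /eqP hj].
  apply: sg_base.
  exists (Ordinal (vmod _ (m - (z * k ^ (n - j)) %% m) hm), j).
  symmetry; apply: lam_mu => // hm1; split; first exact: hK hm1.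
  split => /=.
    by rewrite hj modsubR // natrB ?hpos // natrX.
  rewrite modsubR // natrM !natrX mulNr opprK -mulrA -exprD subnK ?(hK hm1) ?mulr1 //.
  exact: ltnW.
Qed.
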